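(* Let $n$ be a positive integer, $\mathcal{X}=\{\frac1n,\frac2n,\ldots,\frac nn\}$, and let $\mathcal{H}_{TH;n}=\{h_b : b\in\{\frac{1}{2n},\frac{3}{2n},\ldots,\frac{2n+1}{2n}\}\}$ where $h_b:\mathcal{X}\to\{0,1\}$ is given by $h_b(x)=1$ iff $x\le b$. Then for every $0<\alpha<1/3$, the class $\mathcal{H}_{TH;n}$ is $(\alpha,\alpha)$-separable.
   Context: For a class $\mathcal{H}$ over finite domain $\mathcal{X}$, its hypotheses graph is bipartite with parts $\mathcal{H}$ and $\mathcal{X}$, $h$ adjacent to $x$ iff $h(x)=1$. For $S\subseteq\mathcal{X}$, $T\subseteq\mathcal{H}$, $d(S,T)=\frac{e(S,T)}{|S||T|}$ where $e(S,T)$ is the number of edges between $S$ and $T$. Two hypotheses $h_1,h_2$ are $\epsilon$-close if $|\{x: h_1(x)\ne h_2(x)\}|\le\epsilon|\mathcal{X}|$; $B_h(\epsilon)$ is the set of hypotheses $\epsilon$-close to $h$. $T\subseteq\mathcal{H}$ is $(\alpha,\epsilon)$-tight if there is $h$ with $|T\cap B_h(\epsilon)|\ge\alpha|T|$. $\mathcal{H}$ is $(\alpha,\epsilon)$-separable if for every $T\subseteq\mathcal{H}$ that is not $(\alpha,\epsilon)$-tight there exist $S\subseteq\mathcal{X}$ and disjoint $T_0,T_1\subseteq T$ with $|S|\ge\alpha|\mathcal{X}|$, $|T_0|\ge\alpha|T|$, $|T_1|\ge\alpha|T|$ and $|d(S,T_0)-d(S,T_1)|\ge\alpha$. *)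

(* Defs.v *)
From HB Require Import structures.
From mathcomp Require Import all_boot all_order all_algebra.
From mathcomp Require Import reals.
Set Implicit Arguments. Unset Strict Implicit. Unset Printing Implicit Defensive.
Import Order.TTheory GRing.Theory Num.Theory.
Local Open Scope ring_scope.

Definition edges (X : finType) (S : {set X}) (T : {set {ffun X -> bool}}) : nat :=
  #|[set p : X * {ffun X -> bool} | [&& p.1 \in S, p.2 \in T & p.2 p.1]]|.

Definition density (R : realType) (X : finType) (S : {set X})
  (T : {set {ffun X -> bool}}) : R :=
  (edges S T)%:R / (#|S|%:R * #|T|%:R).

Definition eps_close (R : realType) (X : finType) (eps : R)
  (h1 h2 : {ffun X -> bool}) : bool :=
  (#|[set x : X | h1 x != h2 x]|%:R : R) <= eps * #|X|%:R.

Definition ball (R : realType) (X : finType) (H : {set {ffun X -> bool}})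
  (h : {ffun X -> bool}) (eps : R) : {set {ffun X -> bool}} :=
  [set h' in H | eps_close eps h h'].

Definition tight (R : realType) (X : finType) (H : {set {ffun X -> bool}})
  (T : {set {ffun X -> bool}}) (alpha eps : R) : Prop :=
  exists2 h, h \in H & alpha * #|T|%:R <= (#|T :&: ball H h eps|%:R : R).

Definition separable (R : realType) (X : finType) (H : {set {ffun X -> bool}})
  (alpha eps : R) : Prop :=
  forall T : {set {ffun X -> bool}}, T \subset H -> ~ tight H T alpha eps ->
  exists (S : {set X}) (T0 T1 : {set {ffun X -> bool}}),
    [/\ T0 \subset T, T1 \subset T, [disjoint T0 & T1] &
      [/\ alpha * #|X|%:R <= (#|S|%:R : R),
        alpha * #|T|%:R <= (#|T0|%:R : R),
        alpha * #|T|%:R <= (#|T1|%:R : R) &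
        alpha <= `|density R S T0 - density R S T1| ]].

(* Domain X = {1/n, ..., n/n}: i : 'I_n represents the point (i+1)/n.
   Threshold h_b for b = (2j+1)/(2n), j = 0..n:  h_b(x) = 1 iff x <= b. *)
Definition point (n : nat) (i : 'I_n) : rat := (i.+1)%:R / n%:R.
Definition thr (n : nat) (j : 'I_n.+1) : rat := (2 * j + 1)%:R / (2 * n)%:R.
Definition h_thr (n : nat) (j : 'I_n.+1) : {ffun 'I_n -> bool} :=
  [ffun i => point i <= thr j].
Definition H_TH (n : nat) : {set {ffun 'I_n -> bool}} :=
  [set h_thr j | j : 'I_n.+1].

(* Main.v *)
Require Import Defs.
From HB Require Import structures.
From mathcomp Require Import all_boot all_order all_algebra.
From mathcomp Require Import reals.
From mathcomp Require Import zify ring lra.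
Set Implicit Arguments. Unset Strict Implicit.
Import Order.TTheory GRing.Theory Num.Theory.
Local Open Scope ring_scope.

Lemma h_thrE n (j : 'I_n.+1) (i : 'I_n) : h_thr j i = (i < j)%N.
Proof.
rewrite ffunE /point /thr.
have n0 : (0 < n)%N by case: i => i0 /=; lia.
have nz : (n%:R : rat) != 0 by rewrite pnatr_eq0 -lt0n.
have n2z : ((2 * n)%:R : rat) != 0 by rewrite pnatr_eq0; lia.
rewrite -(ler_pM2r (_ : 0 < (2 * n)%:R :> rat)); last by rewrite ltr0n; lia.
have -> : (i.+1)%:R / n%:R * (2 * n)%:R = (2 * i.+1)%:R :> rat.
  rewrite !natrM; field; exact: nz.
rewrite divfK // ler_nat; apply/idP/idP; lia.
Qed.

Lemma h_thr_inj n : injective (@h_thr n).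
Proof.
move=> j k e.
apply/ord_inj/eqP; rewrite eqn_leq; apply/andP; split; rewrite leqNgt; apply/negP => lt.
- have kn : (k < n)%N by have := ltn_ord j; lia.
  have := congr1 (fun f : {ffun _ -> bool} => f (Ordinal kn)) e.
  by rewrite !h_thrE /= lt ltnn.
- have jn : (j < n)%N by have := ltn_ord k; lia.
  have := congr1 (fun f : {ffun _ -> bool} => f (Ordinal jn)) e.
  by rewrite !h_thrE /= lt ltnn.
Qed.

Definition idx n (t : {ffun 'I_n -> bool}) : 'I_n.+1 :=
  odflt ord0 [pick j : 'I_n.+1 | h_thr j == t].

Lemma idxK n t : t \in H_TH n -> h_thr (idx t) = t.
Proof.
move=> /imsetP [j _ ->]; rewrite /idx.
case: pickP => [k /eqP e|/(_ j)]; [exact: e | by rewrite eqxx].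
Qed.

Lemma thrH n (j : 'I_n.+1) : h_thr j \in H_TH n.
Proof. by apply/imsetP; exists j. Qed.

Lemma N1 a x : (0 < a)%N -> (x < a)%N = (x <= a.-1)%N.
Proof. move=> h; apply/idP/idP; lia. Qed.
Lemma N2 a : (0 < a)%N -> (a <= a.-1)%N -> False.
Proof. lia. Qed.
Lemma N3 a n : (a < n.+1)%N -> (a.-1 < n.+1)%N.
Proof. lia. Qed.
Lemma N4 b n x : (n <= b)%N -> (x < n.+1)%N -> (b < x)%N = false.
Proof. move=> h1 h2; apply/negP; lia. Qed.
Lemma N5 x a b : (x < a)%N = false -> (b < x)%N = false -> (a <= x)%N && (x <= b)%N.
Proof. move=> /negbT h1 /negbT h2; apply/andP; lia. Qed.
Lemma N6 x a j b : (a <= j)%N -> (j <= b)%N -> (x < a)%N != (x < j)%N ->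
  (a <= x)%N && (x < b)%N.
Proof.
move=> h1 h2; case: (ltnP x a) => h3; case: (ltnP x j) => h4 //= _; lia.
Qed.
Lemma N7 i a b : (i <= a)%N -> (b <= i)%N -> (a < b)%N -> False.
Proof. lia. Qed.
Lemma N8 a x j : (a <= x)%N -> (j <= a)%N -> (x < j)%N = false.
Proof. move=> *; apply/negP; lia. Qed.
Lemma N9 a x b j : (a <= x)%N -> (x < b)%N -> (b <= j)%N -> (x < j)%N.
Proof. lia. Qed.

Theorem mainTheorem3 (R : realType) (n : nat) (hn : (0 < n)%N) (alpha : R) :
  0 < alpha -> alpha < 1 / 3 -> separable (H_TH n) alpha alpha.
Proof.
move=> a0 a3 T sTH ntight.
set m := #|T|.
have ntH : forall h, h \in H_TH n ->
    (#|T :&: ball (H_TH n) h alpha|%:R : R) < alpha * m%:R.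
  move=> h hH; rewrite ltNge; apply/negP => le; apply: ntight; by exists h.
have inH : forall t, t \in T -> t \in H_TH n := fun t tT => subsetP sTH t tT.
have ballself : forall t, t \in T -> t \in T :&: ball (H_TH n) t alpha.
  move=> t tT; rewrite inE tT /= /ball inE inH //= /eps_close.
  have -> : [set x | t x != t x] = set0 by apply/setP => x; rewrite !inE eqxx.
  by rewrite cards0 mulr_ge0 // ltW.
have m0 : (0 < m)%N.
  rewrite lt0n; apply/negP => /eqP m0; apply: ntight; exists (h_thr ord0).
    by apply/imsetP; exists ord0.
  by rewrite /m in m0; rewrite m0 mulr0.
have am1 : 1 < alpha * m%:R.
  have /card_gt0P [t tT] : (0 < #|T|)%N := m0.
  apply: le_lt_trans (ntH t (inH t tT)).
  by rewrite (_ : 1 = 1%:R) // ler_nat card_gt0; apply/set0Pn; exists t; apply ballself.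
set mR := (m%:R : R) in ntH am1 *.
have mR0 : 0 < mR by rewrite ltr0n.
pose P := fun j : 'I_n.+1 => alpha * mR <= #|[set t in T | (idx t <= j)%N]|%:R.
have Pmax : P ord_max.
  rewrite /P (_ : [set t in T | _] = T); last first.
    by apply/setP => t; rewrite !inE; case: (t \in T) => //=; rewrite -ltnS ltn_ord.
  rewrite -/m -/mR.
  have : 0 <= mR * (1 - alpha) by rewrite mulr_ge0 ?ltW //; lra.
  move=> hp; clear -hp; lra.
case: (arg_minnP (fun j : 'I_n.+1 => j : nat) Pmax) => a Pa amin.
pose Q := fun j : 'I_n.+1 => alpha * mR <= #|[set t in T | (j <= idx t)%N]|%:R.
have Q0 : Q ord0.
  rewrite /Q (_ : [set t in T | _] = T); last first.
    by apply/setP => t; rewrite !inE; case: (t \in T) => //=.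
  rewrite -/m -/mR.
  have : 0 <= mR * (1 - alpha) by rewrite mulr_ge0 ?ltW //; lra.
  move=> hp; clear -hp; lra.
case: (arg_maxnP (fun j : 'I_n.+1 => j : nat) Q0) => b Qb bmax.
have lowA : (#|[set t in T | (idx t < a)%N]|%:R : R) < alpha * mR.
  case: (posnP a) => [a00|apos].
    rewrite (_ : [set t in T | _] = set0) ?cards0; last first.
      by apply/setP => t; rewrite !inE a00 ltn0 andbF.
    by apply: lt_trans am1.
  have a'lt : (a.-1 < n.+1)%N by apply: N3; exact: ltn_ord a.
  have : ~~ P (Ordinal a'lt).
    by apply/negP => /amin /=; apply: N2.
  have -> : [set t in T | (idx t < a)%N] = [set t in T | (idx t <= a.-1)%N].
    by apply/setP => t; rewrite !inE N1.
  by rewrite /P -ltNge.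
have highB : (#|[set t in T | (b < idx t)%N]|%:R : R) < alpha * mR.
  case: (ltnP b n) => [bn|nb].
    have b'lt : (b.+1 < n.+1)%N by exact: bn.
    have : ~~ Q (Ordinal b'lt).
      by apply/negP => /bmax /=; rewrite ltnn.
    by rewrite /Q -ltNge.
  rewrite (_ : [set t in T | _] = set0) ?cards0; last first.
    apply/setP => t; rewrite !inE; case: (t \in T) => //=.
    by rewrite (N4 nb (ltn_ord (idx t))).
  by apply: lt_trans am1.
pose M := [set t in T | (a <= idx t)%N && (idx t <= b)%N].
have cover : (m <= #|[set t in T | (idx t < a)%N]| + #|M|
                 + #|[set t in T | (b < idx t)%N]|)%N.
  apply: (leq_trans _ (leq_add (leq_card_setU _ _) (leqnn _))).
  apply: (leq_trans _ (leq_card_setU _ _)).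
  apply: subset_leq_card; apply/subsetP => t tT; rewrite !inE tT /=.
  case e1: (idx t < a)%N => //=; case e2: (b < idx t)%N; rewrite ?orbT //.
  by rewrite (N5 e1 e2).
have MR : alpha * mR < #|M|%:R.
  have : mR <= (#|[set t in T | (idx t < a)%N]| + #|M|
                 + #|[set t in T | (b < idx t)%N]|)%:R by rewrite ler_nat.
  rewrite !natrD => h.
  have : 0 <= mR * (1 - 3 * alpha) by rewrite mulr_ge0 ?ltW //; lra.
  move=> hp; clear -h lowA highB hp; lra.
have ab : (a < b)%N.
  rewrite ltnNge; apply/negP => ba.
  have : (#|M| <= 1)%N.
    rewrite -(cards1 (h_thr a)); apply: subset_leq_card; apply/subsetP => t.
    rewrite !inE => /and3P [tT h1 h2]; apply/eqP.
    rewrite -(idxK (inH t tT)); congr h_thr; apply/ord_inj/eqP.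
    rewrite eqn_leq h1 andbT; exact: leq_trans h2 ba.
  rewrite -(ler_nat R) => h.
  have := lt_le_trans (lt_trans am1 MR) h; by rewrite ltxx.
pose T0 := [set t in T | (idx t <= a)%N].
pose T1 := [set t in T | (b <= idx t)%N].
pose S := [set i : 'I_n | (a <= i)%N && (i < b)%N].
have Sbig : alpha * n%:R <= (#|S|%:R : R).
  rewrite leNgt; apply/negP => Ssmall.
  have : (#|M| <= #|T :&: ball (H_TH n) (h_thr a) alpha|)%N.
    apply: subset_leq_card; apply/subsetP => t.
    rewrite !inE => /and3P [tT h1 h2]; rewrite tT inH //= /eps_close card_ord.
    apply: le_trans (ltW Ssmall); rewrite ler_nat; apply: subset_leq_card.
    apply/subsetP => x; rewrite !inE -(idxK (inH t tT)) !h_thrE.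
    exact: N6.
  rewrite -(ler_nat R) => h.
  have := lt_le_trans MR h; have := ntH _ (thrH a).
  move=> h3 h4; have := lt_trans h4 h3; by rewrite ltxx.
have Spos : (0 < #|S|)%N.
  rewrite -(ltr0n R); apply: lt_le_trans Sbig; rewrite mulr_gt0 // ltr0n //.
have T1pos : (0 < #|T1|)%N.
  rewrite -(ltr0n R); apply: lt_le_trans Qb; exact: lt_trans am1.
exists S, T0, T1; split.
- by apply/subsetP => t; rewrite inE => /andP [].
- by apply/subsetP => t; rewrite inE => /andP [].
- rewrite -setI_eq0; apply/eqP/setP => t; rewrite !inE; apply/negP.
  move=> /andP [/andP [_ h1] /andP [_ h2]]; exact: N7 h1 h2 ab.
split; rewrite ?card_ord //.
have d0 : density R S T0 = 0.
  rewrite /density /edges (_ : [set p | _] = set0) ?cards0 ?mul0r //.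
  apply/setP => p; rewrite !inE; apply/negP => /and3P [pS /andP [pT pa] pv].
  move: pv; rewrite -(idxK (inH _ pT)) h_thrE; move: pS => /andP [h1 ?].
  by rewrite (N8 h1 pa).
have d1 : density R S T1 = 1.
  rewrite /density /edges (_ : [set p | _] = setX S T1) ?cardsX ?natrM ?divff //.
    by rewrite mulf_neq0 // pnatr_eq0 -lt0n.
  apply/setP => [[x t]]; rewrite !inE /=.
  apply/idP/idP => [/and3P [-> -> _] // | /andP [hx ht]].
  rewrite hx ht /=; move: hx ht => /andP [h1 h2] /andP [tT hb].
  rewrite -(idxK (inH _ tT)) h_thrE; exact: N9 h1 h2 hb.
rewrite d0 d1 sub0r normrN normr1; clear -a3; lra.
Qed.
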